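(* Let $p\ge 3$ be an odd integer, $\mu>0$ and $\alpha>0$. Let $(x_0,y_0)\in\mathbb{R}^2$ and let $(x,y)\in C^1([0,\infty);\mathbb{R}^2)$ be the global solution of \[ x'(t)=y(t),\qquad y'(t)=-\alpha x(t)^p-\mu y(t),\quad t>0,\qquad x(0)=x_0,\ y(0)=y_0. \] Define \[ \mathcal{E}(t):=\frac12 y(t)^2+\frac{\mu}{2}x(t)y(t)+\frac{\mu^2}{4}x(t)^2+\frac{\alpha}{p+1}x(t)^{p+1}. \] Then there exists a constant $C_\dagger>0$ such that \[ \mathcal{E}(t)\le C_\dagger\, t^{-\frac{2}{p-1}}\quad\text{for all } t>0. \] *)

(* Defs.v *)
From Stdlib Require Import Reals Lra Lia.
From Coquelicot Require Import Coquelicot.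
Open Scope R_scope.

Definition energy (p : nat) (mu alpha : R) (x y : R -> R) (t : R) : R :=
  / 2 * (y t) ^ 2 + mu / 2 * x t * y t + mu ^ 2 / 4 * (x t) ^ 2
  + alpha / (INR p + 1) * (x t) ^ (p + 1).

(* Main.v *)
Require Import Defs.
From Stdlib Require Import Reals Lra Lia.
From Coquelicot Require Import Coquelicot.
Open Scope R_scope.

Definition ef (mu g : R) (m : nat) (a b : R) :=
  / 2 * b ^ 2 + mu / 2 * a * b + mu ^ 2 / 4 * a ^ 2 + g * a ^ (2 * m + 2).

Lemma pw_even a m : a ^ (2 * m + 2) = (a ^ 2) ^ (m + 1).
Proof. rewrite <- pow_mult. f_equal. lia. Qed.

Lemma pw_even_ge a m : 0 <= a ^ (2 * m + 2).
Proof. rewrite pw_even. apply pow_le. nra. Qed.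

Lemma ef_lb mu g m a b : 0 < mu -> 0 < g ->
  0 <= ef mu g m a b /\ mu ^ 2 / 8 * a ^ 2 <= ef mu g m a b /\
  / 2 * (b + mu / 2 * a) ^ 2 <= ef mu g m a b.
Proof.
  intros Hm Hg. pose proof (pw_even_ge a m).
  assert (0 <= g * a ^ (2 * m + 2)) by (apply Rmult_le_pos; lra).
  assert (0 <= (b + mu/2*a)^2) by (rewrite <- Rsqr_pow2; apply Rle_0_sqr).
  assert (0 <= mu^2*a^2) by (rewrite <- !Rsqr_pow2; apply Rmult_le_pos; apply Rle_0_sqr).
  assert (E : ef mu g m a b = /2 * (b + mu/2*a)^2 + mu^2/8*a^2 + g * a^(2*m+2)) by (unfold ef; set (z := a^(2*m+2)); field).
  rewrite E. repeat split; lra.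
Qed.

Lemma sum_pow u v n : 0 <= u -> 0 <= v -> (u + v) ^ n <= 2 ^ n * (u ^ n + v ^ n).
Proof.
  intros Hu Hv. pose proof (pow_le u n Hu). pose proof (pow_le v n Hv).
  assert (0 < 2 ^ n) by (apply pow_lt; lra).
  destruct (Rle_dec u v).
  - apply Rle_trans with ((2 * v) ^ n). apply pow_incr; lra.
    rewrite Rpow_mult_distr. nra.
  - apply Rle_trans with ((2 * u) ^ n). apply pow_incr; lra.
    rewrite Rpow_mult_distr. nra.
Qed.

Lemma key mu g al M m : 0 < mu -> 0 < g -> g <= al -> 0 < M ->
  exists K, 0 < K /\ forall a b, ef mu g m a b <= M ->
   ef mu g m a b ^ (m + 1) <= K * (b ^ 2 + al * a ^ (2 * m + 2)).
Proof.
  intros Hm Hg Hga HM.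
  set (X := 8 * M / mu ^ 2).
  set (B := 1 + mu ^ 2 / 2 + al * X ^ m).
  assert (HX : 0 < X) by (unfold X; apply Rdiv_lt_0_compat; [lra | apply pow_lt; lra]).
  assert (HXm : 0 < X ^ m) by (apply pow_lt; lra).
  assert (HB : 0 < B) by (unfold B; assert (0 < al * X^m) by (apply Rmult_lt_0_compat; lra); nra).
  assert (HY : 0 < (8 * M) ^ m) by (apply pow_lt; lra).
  exists ((2 * B) ^ (m + 1) * ((8 * M) ^ m + / al)). split.
  { apply Rmult_lt_0_compat. apply pow_lt; lra.
    assert (0 < / al) by (apply Rinv_0_lt_compat; lra). lra. }
  intros a b He.
  destruct (ef_lb mu g m a b Hm Hg) as [H0 [H1 H2]].
  assert (Ha : a ^ 2 <= X).
  { assert (0 < mu^2) by (apply pow_lt; lra).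
    assert (Eq : a^2 = (mu^2/8*a^2) * (8/mu^2)) by (field; lra). rewrite Eq.
    unfold X. replace (8*M/mu^2) with (M*(8/mu^2)) by (field; lra).
    apply Rmult_le_compat_r; [ apply Rlt_le, Rdiv_lt_0_compat; lra | lra]. }
  assert (Hb : b ^ 2 <= 8 * M).
  { assert (0 <= (b + 2*(mu/2*a))^2) by (rewrite <- Rsqr_pow2; apply Rle_0_sqr).
    assert (b ^ 2 <= 2 * (b + mu/2*a)^2 + 2 * (mu/2*a)^2) by lra.
    assert ((mu/2*a)^2 = 2 * (mu^2/8*a^2)) by field. lra. }
  assert (Ham : (a ^ 2) ^ m <= X ^ m) by (apply pow_incr; split; nra).
  assert (Hbm : (b ^ 2) ^ m <= (8 * M) ^ m) by (apply pow_incr; split; nra).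
  assert (HeB : ef mu g m a b <= B * (b ^ 2 + a ^ 2)).
  { unfold ef, B. rewrite pw_even, pow_add, pow_1.
    assert (0 <= (a^2)^m) by (apply pow_le; nra).
    assert (g * ((a^2)^m * a^2) <= al * X^m * a^2).
    { assert (0 <= a^2) by nra.
      apply Rle_trans with (al * ((a^2)^m * a^2)). apply Rmult_le_compat_r; nra.
      replace (al * X^m * a^2) with (al * (X^m * a^2)) by ring.
      apply Rmult_le_compat_l; [lra|]. apply Rmult_le_compat_r; lra. }
    assert (0 <= (b - mu/2*a)^2) by (rewrite <- Rsqr_pow2; apply Rle_0_sqr).
    assert (mu/2*a*b <= /2*b^2 + mu^2/8*a^2).
    { assert (/2*b^2 + mu^2/8*a^2 - mu/2*a*b = /2*(b - mu/2*a)^2) by field. lra. }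
    assert (0 <= al * X^m * b^2) by (apply Rmult_le_pos; nra).
    nra. }
  apply Rle_trans with ((B * (b ^ 2 + a ^ 2)) ^ (m + 1)).
  { apply pow_incr. lra. }
  rewrite Rpow_mult_distr.
  assert (0 < B ^ (m+1)) by (apply pow_lt; lra).
  pose proof (sum_pow (b^2) (a^2) (m+1) ltac:(nra) ltac:(nra)).
  assert (E1 : (b ^ 2) ^ (m + 1) <= (8 * M) ^ m * b ^ 2).
  { rewrite pow_add, pow_1. assert (0 <= b^2) by nra. nra. }
  assert (E2 : (a ^ 2) ^ (m + 1) = a ^ (2 * m + 2)) by (rewrite pw_even; auto).
  pose proof (pw_even_ge a m).
  assert (E3 : (8 * M) ^ m * b ^ 2 + a ^ (2 * m + 2) <=
     ((8 * M) ^ m + / al) * (b ^ 2 + al * a ^ (2 * m + 2))).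
  { assert (0 < / al) by (apply Rinv_0_lt_compat; lra).
    assert (/ al * al = 1) by (field; lra).
    assert (0 <= b^2) by nra.
    assert (0 <= al * a^(2*m+2)) by (apply Rmult_le_pos; lra).
    nra. }
  rewrite Rpow_mult_distr.
  assert (0 < 2 ^ (m+1)) by (apply pow_lt; lra).
  apply Rle_trans with (B ^ (m + 1) * (2 ^ (m + 1) * ((8 * M) ^ m * b ^ 2 + a ^ (2 * m + 2)))).
  { apply Rmult_le_compat_l. lra. rewrite <- E2. nra. }
  assert (0 < B^(m+1) * 2^(m+1)) by nra. nra.
Qed.
Lemma lim_plus {T} (F : (T -> Prop) -> Prop) {FF : Filter F} f g a b :
  filterlim f F (locally a) -> filterlim g F (locally b) ->
  filterlim (fun t => f t + g t) F (locally (a + b)).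
Proof. intros Hf Hg. exact (filterlim_comp_2 f g Rplus Hf Hg (filterlim_plus a b)). Qed.
Lemma lim_mult {T} (F : (T -> Prop) -> Prop) {FF : Filter F} f g a b :
  filterlim f F (locally a) -> filterlim g F (locally b) ->
  filterlim (fun t => f t * g t) F (locally (a * b)).
Proof. intros Hf Hg. exact (filterlim_comp_2 f g Rmult Hf Hg (filterlim_mult a b)). Qed.
Lemma lim_const {T} (F : (T -> Prop) -> Prop) {FF : Filter F} (c : R) :
  filterlim (fun _ => c) F (locally c).
Proof. apply filterlim_const. Qed.
Lemma lim_pow {T} (F : (T -> Prop) -> Prop) {FF : Filter F} (f : T -> R) (a : R) n :
  filterlim f F (locally a) -> filterlim (fun t => f t ^ n) F (locally (a ^ n)).
Proof. intros Hf. induction n; simpl. apply (lim_const F). apply (lim_mult F); auto. Qed.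

Lemma deriv_E (x y : R -> R) mu al g n t : is_derive x t (y t) ->
  is_derive y t (- al * (x t) ^ (2*n+1) - mu * y t) ->
  g * (INR (2*n+1) + 1) = al ->
  is_derive (fun t => ef mu g n (x t) (y t)) t
   (- (mu / 2) * (y t ^ 2 + al * x t ^ (2 * n + 2))).
Proof.
intros Hx Hy Hg. unfold ef.
auto_derive.
{ repeat split; eexists; eauto. }
replace (Derive (fun x0 => x x0) t) with (y t) by (symmetry; apply is_derive_unique; auto).
replace (Derive (fun x0 => y x0) t) with (- al * x t ^ (2 * n + 1) - mu * y t) by (symmetry; apply is_derive_unique; auto).
replace (n + (n + 0) + 2)%nat with (S (2*n+1)) by lia.
replace (2*n+2)%nat with (S (2*n+1)) by lia.
rewrite <- Hg. rewrite S_INR. simpl Init.Nat.pred. simpl pow.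
set (z := x t ^ (2*n+1)). set (I := INR (2*n+1)). field.
Qed.

Lemma deriv_cont f t l : is_derive f t l -> continuity_pt f t.
Proof.
  intros H. apply continuity_pt_filterlim. apply (ex_derive_continuous f t). exists l; auto.
Qed.

Lemma comp (E D : R -> R) n c : 0 < c ->
  (forall t, 0 < t -> is_derive E t (D t)) ->
  (forall t, 0 < t -> D t <= - c * E t ^ (S n + 1)) ->
  (forall s t, 0 < s -> s <= t -> E t <= E s) ->
  forall s t, 0 < s -> s < t -> 0 < E t ->
  / E t ^ (S n) - / E s ^ (S n) >= INR (S n) * c * (t - s).
Proof.
  intros Hc HdE HD Hmono s t Hs Hst Ht.
  set (h' := fun u => - (INR (S n) * D u * E u ^ Init.Nat.pred (S n)) / (E u ^ S n) ^ 2).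
  assert (Hpos : forall u, s <= u <= t -> 0 < E u).
  { intros u Hu. apply Rlt_le_trans with (E t); auto. apply Hmono; lra. }
  assert (Hd : forall u, s <= u <= t -> is_derive (fun v => / E v ^ S n) u (h' u)).
  { intros u Hu. unfold h'. apply is_derive_inv.
    apply is_derive_pow. apply HdE. lra.
    apply Rgt_not_eq. apply pow_lt. apply Hpos; auto. }
  destruct (MVT_gen (fun v => / E v ^ S n) s t h') as [xi [Hxi Heq]].
  { intros u Hu. rewrite Rmin_left, Rmax_right in Hu by lra. apply Hd. lra. }
  { intros u Hu. rewrite Rmin_left, Rmax_right in Hu by lra. eapply deriv_cont. apply Hd. lra. }
  rewrite Rmin_left, Rmax_right in Hxi by lra.
  rewrite Heq. apply Rle_ge. apply Rmult_le_compat_r. lra.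
  unfold h'. simpl Init.Nat.pred.
  pose proof (Hpos xi Hxi) as He. pose proof (HD xi ltac:(lra)) as HDx.
  set (e := E xi) in *. set (d := D xi) in *.
  assert (HP : 0 < e ^ n) by (apply pow_lt; auto).
  set (P := e ^ n) in *.
  replace (e ^ (S n + 1)) with (e * P * e) in HDx by (rewrite pow_add; simpl; unfold P; ring).
  replace (e ^ S n) with (e * P) by (simpl; unfold P; ring).
  assert (HN : 0 < INR (S n)) by (apply lt_0_INR; lia).
  assert (HQ : 0 < (e * P) ^ 2) by (apply pow_lt; nra).
  apply (Rmult_le_reg_r ((e * P) ^ 2)); auto.
  replace (- (INR (S n) * d * P) / (e * P) ^ 2 * (e * P) ^ 2) with (- (INR (S n) * d * P)) by (field; nra).
  assert (0 <= INR (S n) * P * (- d - c * (e * P * e))) by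
    (apply Rmult_le_pos; [nra | lra]).
  nra.
Qed.

Lemma Rpower_inv_base x z : 0 < x -> Rpower (/ x) z = Rpower x (- z).
Proof. intros Hx. unfold Rpower. rewrite ln_Rinv by auto. f_equal. ring. Qed.

Theorem proposition2 (p : nat) (mu alpha x0 y0 : R) (x y : R -> R) :
  (3 <= p)%nat -> Nat.Odd p -> 0 < mu -> 0 < alpha ->
  (* (x,y) is a solution on [0, oo): C^1 on (0,oo), continuous at 0 from the right *)
  (forall t, 0 < t -> is_derive x t (y t)) ->
  (forall t, 0 < t -> is_derive y t (- alpha * (x t) ^ p - mu * y t)) ->
  filterlim x (at_right 0) (locally (x 0)) ->
  filterlim y (at_right 0) (locally (y 0)) ->
  x 0 = x0 -> y 0 = y0 ->
  exists C : R, 0 < C /\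
    forall t, 0 < t -> energy p mu alpha x y t <= C * Rpower t (- (2 / (INR p - 1))).
Proof.
  intros Hp3 [n Hpn] Hmu Hal Hdx Hdy Hlx Hly _ _. subst p.
  destruct n as [|k]. { lia. }
  set (m := S k).
  assert (HI : 0 <= INR (2 * m + 1)) by apply pos_INR.
  set (g := alpha / (INR (2 * m + 1) + 1)).
  assert (Hg : g * (INR (2 * m + 1) + 1) = alpha) by (unfold g; field; lra).
  assert (Hg0 : 0 < g) by (unfold g; apply Rdiv_lt_0_compat; lra).
  assert (Hga : g <= alpha) by nra.
  set (E := fun t => ef mu g m (x t) (y t)).
  assert (HE : forall t, energy (2 * m + 1) mu alpha x y t = E t).
  { intros t. unfold energy, E, ef, g. replace (2 * m + 1 + 1)%nat with (2 * m + 2)%nat by lia.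
    reflexivity. }
  set (D := fun t => - (mu / 2) * (y t ^ 2 + alpha * x t ^ (2 * m + 2))).
  assert (HdE : forall t, 0 < t -> is_derive E t (D t)).
  { intros t Ht. unfold E, D. apply deriv_E; auto. }
  assert (HD0 : forall t, D t <= 0).
  { intros t. unfold D. pose proof (pw_even_ge (x t) m).
    assert (0 <= y t ^ 2) by (rewrite <- Rsqr_pow2; apply Rle_0_sqr).
    assert (0 <= alpha * x t ^ (2 * m + 2)) by (apply Rmult_le_pos; lra). nra. }
  assert (Hmono : forall s t, 0 < s -> s <= t -> E t <= E s).
  { intros s t Hs Hst. destruct (Req_dec s t) as [->|Hne]; [lra|].
    destruct (MVT_gen E s t D) as [xi [Hxi Heq]].
    { intros u Hu. rewrite Rmin_left, Rmax_right in Hu by lra. apply HdE. lra. }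
    { intros u Hu. rewrite Rmin_left, Rmax_right in Hu by lra. eapply deriv_cont. apply HdE. lra. }
    pose proof (HD0 xi). assert (D xi * (t - s) <= 0) by (apply Rmult_le_0_r; lra). lra. }
  assert (Hnn : forall t, 0 <= E t).
  { intros t. destruct (ef_lb mu g m (x t) (y t)) as [H _]; auto. }
  assert (Hlim : filterlim E (at_right 0) (locally (E 0))).
  { unfold E, ef.
    repeat first [apply (lim_plus (at_right 0)) | apply (lim_mult (at_right 0)) | apply (lim_pow (at_right 0)) | apply (lim_const (at_right 0)) | assumption]. }
  assert (Hbd : forall t, 0 < t -> E t <= E 0).
  { intros t Ht. destruct (Rle_dec (E t) (E 0)) as [|Hn]; auto. exfalso.
    assert (Heps : 0 < E t - E 0) by lra.
    destruct (proj1 (filterlim_locally E (E 0)) Hlim (mkposreal _ Heps)) as [del Hdel].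
    set (s := Rmin (del / 2) (t / 2)).
    assert (Hs0 : 0 < s) by (unfold s; apply Rmin_glb_lt; destruct del; simpl; lra).
    assert (Hs1 : s <= t / 2) by apply Rmin_r.
    assert (Hs2 : s <= del / 2) by apply Rmin_l.
    assert (Hb : ball 0 del s).
    { change (Rabs (s - 0) < del). rewrite Rminus_0_r, Rabs_pos_eq by lra. destruct del; simpl in *; lra. }
    specialize (Hdel s Hb Hs0). change (Rabs (E s - E 0) < E t - E 0) in Hdel.
    apply Rabs_def2 in Hdel. pose proof (Hmono s t Hs0 ltac:(lra)). lra. }
  set (M := E 0 + 1).
  assert (HM : 0 < M) by (unfold M; pose proof (Hnn 0); lra).
  destruct (key mu g alpha M m Hmu Hg0 Hga HM) as [K [HK HKb]].
  set (c := mu / (2 * K)).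
  assert (Hc : 0 < c) by (unfold c; apply Rdiv_lt_0_compat; lra).
  assert (HDc : forall t, 0 < t -> D t <= - c * E t ^ (S k + 1)).
  { intros t Ht. assert (HEt : E t <= M) by (unfold M; pose proof (Hbd t Ht); lra).
    pose proof (HKb (x t) (y t) HEt) as H. fold (E t) in H. fold m. unfold D, c.
    assert (E t ^ (m + 1) / K <= y t ^ 2 + alpha * x t ^ (2 * m + 2)).
    { apply (Rmult_le_reg_r K); auto. replace (E t ^ (m + 1) / K * K) with (E t ^ (m + 1)) by (field; lra). lra. }
    replace (- (mu / (2 * K)) * E t ^ (m + 1)) with (- (mu / 2) * (E t ^ (m + 1) / K)) by (field; lra).
    nra. }
  set (c' := INR (S k) * c).
  assert (HN : 0 < INR (S k)) by (apply lt_0_INR; lia).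
  assert (Hc' : 0 < c') by (unfold c'; nra).
  exists (Rpower (/ c') (/ INR (S k))). split.
  { unfold Rpower. apply exp_pos. }
  intros t Ht. rewrite HE.
  assert (Hexp : - (2 / (INR (2 * m + 1) - 1)) = - (/ INR (S k))).
  { unfold m. rewrite plus_INR, mult_INR. replace (INR 2) with 2 by (simpl; ring).
    replace (INR 1) with 1 by reflexivity. field. lra. }
  rewrite Hexp.
  assert (HRp : 0 < Rpower (/ c') (/ INR (S k)) * Rpower t (- / INR (S k))).
  { unfold Rpower. apply Rmult_lt_0_compat; apply exp_pos. }
  destruct (Hnn t) as [Hpos | Hz]; [| rewrite <- Hz; lra].
  assert (Hinv : / E t ^ (S k) >= c' * t).
  { destruct (Rge_dec (/ E t ^ S k) (c' * t)) as [|Hlt]; auto. exfalso.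
    assert (Hh : 0 < / E t ^ S k) by (apply Rinv_0_lt_compat, pow_lt; auto).
    set (hh := / E t ^ S k) in *.
    set (s := (c' * t - hh) / c' / 2).
    assert (Hs0 : 0 < s) by (unfold s; apply Rdiv_lt_0_compat; [apply Rdiv_lt_0_compat|]; lra).
    assert (Hcs : c' * s = (c' * t - hh) / 2) by (unfold s; field; lra).
    assert (Hst : s < t) by (apply (Rmult_lt_reg_l c'); lra).
    pose proof (comp E D k c Hc HdE HDc Hmono s t Hs0 Hst Hpos) as Hcmp.
    fold c' in Hcmp. fold hh in Hcmp.
    replace (c' * (t - s)) with (c' * t - c' * s) in Hcmp by ring.
    assert (0 < / E s ^ S k) by (apply Rinv_0_lt_compat, pow_lt; apply Rlt_le_trans with (E t); [auto | apply Hmono; lra]).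
    lra. }
  assert (Hle : E t ^ S k <= / (c' * t)).
  { assert (Hct : 0 < c' * t) by nra.
    rewrite <- (Rinv_inv (E t ^ S k)). apply Rinv_le_contravar; auto. lra. }
  assert (HEt : E t = Rpower (E t ^ S k) (/ INR (S k))).
  { rewrite <- Rpower_pow by auto. rewrite Rpower_mult, Rinv_r, Rpower_1 by lra; auto. }
  rewrite HEt.
  apply Rle_trans with (Rpower (/ (c' * t)) (/ INR (S k))).
  { apply Rle_Rpower_l. apply Rlt_le, Rinv_0_lt_compat; lra.
    split; auto. apply pow_lt; auto. }
  rewrite Rinv_mult, <- Rpower_mult_distr, (Rpower_inv_base t) by (try apply Rinv_0_lt_compat; lra).
  lra.
Qed.
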